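(* Let $\Phi:[a,b]\to\mathbb{C}$ be continuous and nowhere zero, and let $X^{(n)}$, $\widetilde X^{(n)}$ ($n\ge 0$) be the $\Phi$-power functions defined below. Then for all $x_0,x\in[a,b]$: $$\widetilde X^{(n)}(x_0,x)=X^{(n)}(x,x_0)\quad\text{for } n \text{ even},$$ and $$\widetilde X^{(n)}(x_0,x)=-\widetilde X^{(n)}(x,x_0),\qquad X^{(n)}(x_0,x)=-X^{(n)}(x,x_0)\quad\text{for } n \text{ odd}.$$
   Context: For $x_0,x\in[a,b]$ the $\Phi$-power functions are defined recursively by $X^{(0)}(x_0,x)\equiv 1$, $\widetilde X^{(0)}(x_0,x)\equiv 1$ and, for $n\ge 1$, $$X^{(n)}(x_0,x)=n\int_{x_0}^x X^{(n-1)}(x_0,\xi)\,\big(\Phi(\xi)\big)^{(-1)^n}\,d\xi,\qquad \widetilde X^{(n)}(x_0,x)=n\int_{x_0}^x \widetilde X^{(n-1)}(x_0,\xi)\,\Big(\frac{1}{\Phi(\xi)}\Big)^{(-1)^n}\,d\xi.$$ *)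

(* Defs.v *)
From Stdlib Require Import Reals.
From Coquelicot Require Import Coquelicot.
Open Scope R_scope.

Fixpoint Xpow (Phi : R -> C) (n : nat) (x0 x : R) : C :=
  match n with
  | O => RtoC 1
  | S m =>
      Cmult (RtoC (INR (S m)))
        (@RInt C_R_CompleteNormedModule (fun xi : R =>
                 Cmult (Xpow Phi m x0 xi)
                   (if Nat.even (S m) then Phi xi else Cinv (Phi xi)))
              x0 x)
  end.

Definition Xtilde (Phi : R -> C) (n : nat) (x0 x : R) : C :=
  Xpow (fun xi => Cinv (Phi xi)) n x0 x.

Definition continuous_on_ab (a b : R) (Phi : R -> C) : Prop :=
  forall x, a <= x <= b ->
    filterlim Phi (within (fun y => a <= y <= b) (locally x)) (locally (Phi x)).

(* Main.v *)
Require Import Defs.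
From Stdlib Require Import Reals Lra Lia.
From Coquelicot Require Import Coquelicot.
Open Scope R_scope.

Lemma cont_C_intro (f : R -> C) x :
  continuous (fun y => fst (f y)) x -> continuous (fun y => snd (f y)) x ->
  continuous f x.
Proof.
  intros H1 H2 P [eps HP].
  assert (A1 := H1 _ (locally_ball (fst (f x)) eps)).
  assert (A2 := H2 _ (locally_ball (snd (f x)) eps)).
  assert (A : locally x (fun y => ball (fst (f x)) eps (fst (f y)) /\ ball (snd (f x)) eps (snd (f y)))) by (apply filter_and; [apply A1|apply A2]).
  unfold filtermap. revert A. apply filter_imp. intros y [B1 B2]. apply HP. split; assumption.
Qed.

Lemma cont_C_fst (f : R -> C) x : continuous f x -> continuous (fun y => fst (f y)) x.
Proof.
  intros H. apply continuous_comp with (g := fst); auto.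
  destruct (f x) as [u v]. apply continuous_fst.
Qed.
Lemma cont_C_snd (f : R -> C) x : continuous f x -> continuous (fun y => snd (f y)) x.
Proof.
  intros H. apply continuous_comp with (g := snd); auto.
  destruct (f x) as [u v]. apply continuous_snd.
Qed.

Lemma cont_R_mult (f g : R -> R) x : continuous f x -> continuous g x -> continuous (fun y => f y * g y) x.
Proof. intros. apply (continuous_mult f g); auto. Qed.
Lemma cont_R_plus (f g : R -> R) x : continuous f x -> continuous g x -> continuous (fun y => f y + g y) x.
Proof. intros. apply (continuous_plus f g); auto. Qed.
Lemma cont_R_opp (f : R -> R) x : continuous f x -> continuous (fun y => - f y) x.
Proof. intros. apply (continuous_opp f); auto. Qed.

Lemma cont_Cmult (f g : R -> C) x : continuous f x -> continuous g x -> continuous (fun y => Cmult (f y) (g y)) x.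
Proof.
  intros Hf Hg. apply cont_C_intro; simpl.
  - apply (cont_R_plus (fun y => fst (f y) * fst (g y)) (fun y => - (snd (f y) * snd (g y)))).
    + apply cont_R_mult; [apply cont_C_fst|apply cont_C_fst]; auto.
    + apply cont_R_opp, cont_R_mult; [apply cont_C_snd|apply cont_C_snd]; auto.
  - apply cont_R_plus; apply cont_R_mult; first [apply cont_C_fst; auto | apply cont_C_snd; auto].
Qed.

Lemma cont_Cplus (f g : R -> C) x : continuous f x -> continuous g x -> continuous (fun y => Cplus (f y) (g y)) x.
Proof.
  intros Hf Hg. apply cont_C_intro; simpl; apply cont_R_plus;
   first [apply cont_C_fst; auto | apply cont_C_snd; auto].
Qed.

Lemma cont_Cinv (f : R -> C) x : continuous f x -> f x <> RtoC 0 -> continuous (fun y => Cinv (f y)) x.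
Proof.
  intros Hf Hn.
  assert (D : fst (f x) ^ 2 + snd (f x) ^ 2 <> 0).
  { intro E. apply Hn. destruct (f x) as [u v]; simpl in E.
    assert (u = 0) by nra. assert (v = 0) by nra. subst. reflexivity. }
  assert (Hd : continuous (fun y => fst (f y) ^ 2 + snd (f y) ^ 2) x).
  { apply cont_R_plus; simpl; apply cont_R_mult; try apply cont_R_mult;
    first [apply cont_C_fst; auto | apply cont_C_snd; auto | apply continuous_const]. }
  apply cont_C_intro; simpl.
  - apply cont_R_mult; [apply cont_C_fst; auto|].
    apply (continuous_Rinv_comp (fun y => fst (f y) ^ 2 + snd (f y) ^ 2)); auto.
  - apply cont_R_mult; [apply cont_R_opp, cont_C_snd; auto|].
    apply (continuous_Rinv_comp (fun y => fst (f y) ^ 2 + snd (f y) ^ 2)); auto.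
Qed.

Lemma isR_fst (f : R -> C) a b l : is_RInt f a b l -> is_RInt (fun t => fst (f t)) a b (fst l).
Proof. intros H. apply (@is_RInt_fct_extend_fst R_NormedModule R_NormedModule f a b l H). Qed.
Lemma isR_snd (f : R -> C) a b l : is_RInt f a b l -> is_RInt (fun t => snd (f t)) a b (snd l).
Proof. intros H. apply (@is_RInt_fct_extend_snd R_NormedModule R_NormedModule f a b l H). Qed.
Lemma isR_pair (f : R -> C) a b l :
  is_RInt (fun t => fst (f t)) a b (fst l) -> is_RInt (fun t => snd (f t)) a b (snd l) -> is_RInt f a b l.
Proof. intros H1 H2. destruct l as [u v].
  apply (@is_RInt_fct_extend_pair R_NormedModule R_NormedModule f a b u v H1 H2). Qed.

Lemma isR_lin (f1 f2 : R -> R) a b l1 l2 (c1 c2 : R) :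
  is_RInt f1 a b l1 -> is_RInt f2 a b l2 ->
  is_RInt (fun t => c1 * f1 t + c2 * f2 t) a b (c1 * l1 + c2 * l2).
Proof.
  intros H1 H2.
  exact (is_RInt_plus _ _ a b _ _ (is_RInt_scal _ a b c1 _ H1) (is_RInt_scal _ a b c2 _ H2)).
Qed.

Lemma isR_conv {V : NormedModule R_AbsRing} (f g : R -> V) a b l l' :
  is_RInt f a b l -> l = l' -> (forall x, f x = g x) -> is_RInt g a b l'.
Proof. intros H <- E. eapply is_RInt_ext; [|exact H]. intros; auto. Qed.

Lemma is_RInt_Cmult_l (f : R -> C) a b l c :
  is_RInt f a b l -> is_RInt (fun x => Cmult c (f x)) a b (Cmult c l).
Proof.
  intros H. apply isR_pair.
  - simpl. assert (K := isR_lin _ _ a b _ _ (fst c) (- snd c) (isR_fst _ _ _ _ H) (isR_snd _ _ _ _ H)).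
    eapply isR_conv; [exact K| simpl; ring | intros; simpl; ring].
  - simpl. assert (K := isR_lin _ _ a b _ _ (fst c) (snd c) (isR_snd _ _ _ _ H) (isR_fst _ _ _ _ H)).
    eapply isR_conv; [exact K| simpl; ring | intros; simpl; ring].
Qed.

Notation CInt f a b := (@RInt C_R_CompleteNormedModule f a b).

Lemma CInt_correct (f : R -> C) a b : ex_RInt f a b -> is_RInt f a b (CInt f a b).
Proof. intros H. exact (@RInt_correct C_R_CompleteNormedModule f a b H). Qed.
Lemma CInt_unique (f : R -> C) a b l : is_RInt f a b l -> CInt f a b = l.
Proof. intros H. exact (@is_RInt_unique C_R_CompleteNormedModule f a b l H). Qed.

Lemma CInt_mult_l (f : R -> C) a b c :
  ex_RInt f a b -> CInt (fun x => Cmult c (f x)) a b = Cmult c (CInt f a b).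
Proof. intros H. apply CInt_unique. apply is_RInt_Cmult_l. apply CInt_correct; auto. Qed.
Ltac cunf := repeat progress (simpl; unfold scal, plus, minus, opp, zero, prod_scal, prod_plus, prod_opp, prod_zero, mult, Cmult, Cplus, Copp, Cminus, RtoC, Ci; simpl).
Ltac cgen := repeat match goal with |- context [CInt ?f ?a ?b] => let z := fresh "z" in set (z := CInt f a b) in *; clearbody z end.
Ltac csolve := cgen; apply injective_projections; cunf; ring.

Lemma CInt_mult_r (f : R -> C) a b c :
  ex_RInt f a b -> CInt (fun x => Cmult (f x) c) a b = Cmult (CInt f a b) c.
Proof. intros H. rewrite Cmult_comm, <- CInt_mult_l by auto.
  apply RInt_ext. intros; apply Cmult_comm. Qed.

Lemma CInt_plus (f g : R -> C) a b :
  ex_RInt f a b -> ex_RInt g a b -> CInt (fun x => Cplus (f x) (g x)) a b = Cplus (CInt f a b) (CInt g a b).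
Proof. intros Hf Hg. apply CInt_unique.
  exact (is_RInt_plus _ _ a b _ _ (CInt_correct _ _ _ Hf) (CInt_correct _ _ _ Hg)). Qed.

Lemma CInt_Chasles (f : R -> C) a b c :
  ex_RInt f a b -> ex_RInt f b c -> Cplus (CInt f a b) (CInt f b c) = CInt f a c.
Proof. intros H1 H2. symmetry. apply CInt_unique.
  exact (is_RInt_Chasles _ a b c _ _ (CInt_correct _ _ _ H1) (CInt_correct _ _ _ H2)). Qed.

Lemma CInt_swap (f : R -> C) a b : ex_RInt f a b -> CInt f b a = Copp (CInt f a b).
Proof. intros H. apply CInt_unique.
  exact (is_RInt_swap _ b a _ (CInt_correct _ _ _ H)). Qed.

Lemma CInt_point (f : R -> C) a : CInt f a a = RtoC 0.
Proof. apply CInt_unique. exact (is_RInt_point f a). Qed.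

Lemma CInt_ext (f g : R -> C) a b : (forall x, f x = g x) -> CInt f a b = CInt g a b.
Proof. intros H. apply RInt_ext. intros; auto. Qed.

Lemma exC (f : R -> C) a b : (forall x, continuous f x) -> ex_RInt f a b.
Proof. intros H. apply (@ex_RInt_continuous C_R_CompleteNormedModule). intros; apply H. Qed.

Lemma CInt_cont (f : R -> C) s : (forall x, continuous f x) -> forall x, continuous (fun y => CInt f s y) x.
Proof. intros H x. apply (continuous_RInt_1 f s x).
  apply filter_forall. intros y. apply CInt_correct, exC, H. Qed.

Lemma CInt_derive (f : R -> C) s : (forall x, continuous f x) -> forall x, is_derive (fun y => CInt f s y) x (f x).
Proof. intros H x. apply (is_derive_RInt f _ s x); [|apply H].
  apply filter_forall. intros y. apply CInt_correct, exC, H. Qed.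

Lemma IBP_key (g h : R -> C) s t :
  (forall x, continuous g x) -> (forall x, continuous h x) ->
  is_RInt (fun x => Cplus (Cmult (CInt g s x) (h x)) (Cmult (g x) (CInt h s x))) s t
          (Cmult (CInt g s t) (CInt h s t)).
Proof.
  intros Hg Hh.
  set (G1 := fun x => RInt (fun y => fst (g y)) s x).
  set (G2 := fun x => RInt (fun y => snd (g y)) s x).
  assert (E1 : forall x, fst (CInt g s x) = G1 x).
  { intros x. symmetry. apply is_RInt_unique. apply isR_fst. apply CInt_correct, exC, Hg. }
  assert (E2 : forall x, snd (CInt g s x) = G2 x).
  { intros x. symmetry. apply is_RInt_unique. apply isR_snd. apply CInt_correct, exC, Hg. }
  assert (Cg1 : forall x, continuous (fun y => fst (g y)) x) by (intros; apply cont_C_fst, Hg).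
  assert (Cg2 : forall x, continuous (fun y => snd (g y)) x) by (intros; apply cont_C_snd, Hg).
  assert (D1 : forall x, is_derive G1 x (fst (g x))).
  { intros x. apply (is_derive_RInt (fun y => fst (g y)) G1 s x); [|apply Cg1].
    apply filter_forall. intros y. apply (RInt_correct (V:=R_CompleteNormedModule)).
    apply (ex_RInt_continuous (V:=R_CompleteNormedModule)). intros; apply Cg1. }
  assert (D2 : forall x, is_derive G2 x (snd (g x))).
  { intros x. apply (is_derive_RInt (fun y => snd (g y)) G2 s x); [|apply Cg2].
    apply filter_forall. intros y. apply (RInt_correct (V:=R_CompleteNormedModule)).
    apply (ex_RInt_continuous (V:=R_CompleteNormedModule)). intros; apply Cg2. }
  assert (Cih : forall x, continuous (fun y => Cmult Ci (h y)) x).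
  { intros; apply cont_Cmult; [apply continuous_const|apply Hh]. }
  assert (DH : forall x, is_derive (fun y => CInt h s y) x (h x)) by (apply CInt_derive, Hh).
  assert (DiH : forall x, is_derive (fun y => Cmult Ci (CInt h s y)) x (Cmult Ci (h x))).
  { intros x. eapply is_derive_ext; [|apply (CInt_derive _ s Cih x)].
    intros y. simpl. apply CInt_mult_l, exC, Hh. }
  assert (A := @is_RInt_scal_derive C_R_CompleteNormedModule G1 (fun y => CInt h s y) (fun y => fst (g y)) h s t
     (fun x _ => D1 x) (fun x _ => DH x) (fun x _ => Cg1 x) (fun x _ => Hh x)).
  assert (B := @is_RInt_scal_derive C_R_CompleteNormedModule G2 (fun y => Cmult Ci (CInt h s y)) (fun y => snd (g y)) (fun y => Cmult Ci (h y)) s t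
     (fun x _ => D2 x) (fun x _ => DiH x) (fun x _ => Cg2 x) (fun x _ => Cih x)).
  assert (AB := is_RInt_plus _ _ s t _ _ A B).
  eapply isR_conv; [exact AB| |].
  - rewrite <- E1, <- E2, !CInt_point. csolve.
  - intros x. simpl. rewrite <- E1, <- E2. csolve.
Qed.

Lemma IBP (g h : R -> C) s t :
  (forall x, continuous g x) -> (forall x, continuous h x) ->
  CInt (fun x => Cmult (CInt g s x) (h x)) s t = CInt (fun y => Cmult (g y) (CInt h y t)) s t.
Proof.
  intros Hg Hh.
  assert (K := CInt_unique _ _ _ _ (IBP_key g h s t Hg Hh)).
  assert (CG : forall x, continuous (fun y => CInt g s y) x) by (apply CInt_cont, Hg).
  assert (CH : forall x, continuous (fun y => CInt h s y) x) by (apply CInt_cont, Hh).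
  rewrite CInt_plus in K.
  2: apply exC; intros; apply cont_Cmult; auto.
  2: apply exC; intros; apply cont_Cmult; auto.
  rewrite (CInt_ext (fun y => Cmult (g y) (CInt h y t)) (fun y => Cplus (Cmult (g y) (CInt h s t)) (Copp (Cmult (g y) (CInt h s y))))).
  2:{ intros y. rewrite <- (CInt_Chasles h s y t) by (apply exC, Hh). ring. }
  rewrite CInt_plus.
  2: apply exC; intros; apply cont_Cmult; auto using continuous_const.
  2: apply exC; intros; apply (continuous_opp (V:=C_R_NormedModule)); apply cont_Cmult; auto.
  rewrite CInt_mult_r by (apply exC, Hg).
  rewrite (CInt_ext (fun x => Copp (Cmult (g x) (CInt h s x))) (fun x => Cmult (RtoC (-1)) (Cmult (g x) (CInt h s x)))) by (intros; csolve).
  rewrite CInt_mult_l by (apply exC; intros; apply cont_Cmult; auto).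
  rewrite <- K. csolve.
Qed.

Fixpoint csum (f : nat -> C) (n : nat) : C :=
  match n with O => f O | S m => Cplus (csum f m) (f (S m)) end.

Lemma csum_ext (f g : nat -> C) n : (forall k, (k <= n)%nat -> f k = g k) -> csum f n = csum g n.
Proof. induction n; intros H; simpl. apply H; lia. rewrite IHn by (intros; apply H; lia). rewrite H by lia. reflexivity. Qed.

Lemma csum_mult_l (f : nat -> C) c n : Cmult c (csum f n) = csum (fun k => Cmult c (f k)) n.
Proof. induction n; simpl. reflexivity. rewrite <- IHn. ring. Qed.

Lemma csum_mult_r (f : nat -> C) c n : Cmult (csum f n) c = csum (fun k => Cmult (f k) c) n.
Proof. induction n; simpl. reflexivity. rewrite <- IHn. ring. Qed.

Lemma cont_csum (f : nat -> R -> C) n x : (forall k, (k <= n)%nat -> continuous (f k) x) -> continuous (fun y => csum (fun k => f k y) n) x.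
Proof. intros H. induction n; simpl. apply H; lia. apply cont_Cplus. apply IHn; intros; apply H; lia. apply H; lia. Qed.

Lemma CInt_csum (f : nat -> R -> C) n a b : (forall k x, (k <= n)%nat -> continuous (f k) x) ->
  CInt (fun x => csum (fun k => f k x) n) a b = csum (fun k => CInt (f k) a b) n.
Proof. intros H. induction n; simpl. reflexivity.
  rewrite CInt_plus. rewrite IHn. reflexivity. intros; apply H; lia.
  apply exC. intros; apply cont_csum; intros; apply H; lia. apply exC; intros; apply H; lia. Qed.

Definition wcont (ws : nat -> R -> C) := forall i x, continuous (ws i) x.

Fixpoint J (ws : nat -> R -> C) (n : nat) (s t : R) : C :=
  match n with
  | O => RtoC 1
  | S m => CInt (fun xi => Cmult (J ws m s xi) (ws m xi)) s t
  end.

Definition sh (k : nat) (ws : nat -> R -> C) : nat -> R -> C := fun i => ws (k + i)%nat.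

Lemma wcont_sh k ws : wcont ws -> wcont (sh k ws).
Proof. intros H i x. apply H. Qed.

Lemma J_cont2 ws n s : wcont ws -> forall t, continuous (J ws n s) t.
Proof. intros Hw. induction n; intros t; simpl.
  apply continuous_const.
  apply (CInt_cont (fun xi => Cmult (J ws n s xi) (ws n xi))). intros; apply cont_Cmult; auto. Qed.

Lemma J_ext ws ws' n s t : (forall i x, (i < n)%nat -> ws i x = ws' i x) -> J ws n s t = J ws' n s t.
Proof. revert t. induction n; intros t H; simpl. reflexivity.
  apply CInt_ext. intros x. rewrite IHn by (intros; apply H; lia). rewrite H by lia. reflexivity. Qed.

Lemma Chen ws n : wcont ws -> forall s y t,
  J ws n s t = csum (fun k => Cmult (J ws k s y) (J (sh k ws) (n - k) y t)) n.
Proof.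
  intros Hw. induction n; intros s y t.
  - simpl. ring.
  - change (J ws (S n) s t) with (CInt (fun xi => Cmult (J ws n s xi) (ws n xi)) s t).
    assert (Ex : forall a b, ex_RInt (fun xi => Cmult (J ws n s xi) (ws n xi)) a b).
    { intros; apply exC; intros; apply cont_Cmult; [apply J_cont2; auto| apply Hw]. }
    rewrite <- (CInt_Chasles _ s y t) by auto.
    rewrite (CInt_ext (fun xi => Cmult (J ws n s xi) (ws n xi))
       (fun xi => csum (fun k => Cmult (J ws k s y) (Cmult (J (sh k ws) (n - k) y xi) (ws n xi))) n) y t).
    2:{ intros x. rewrite (IHn s y x), csum_mult_r. apply csum_ext. intros; ring. }
    rewrite (CInt_csum (fun k xi => Cmult (J ws k s y) (Cmult (J (sh k ws) (n - k) y xi) (ws n xi)))).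
    2:{ intros k x _. apply cont_Cmult; [apply continuous_const|]. apply cont_Cmult; [apply J_cont2, wcont_sh; auto| apply Hw]. }
    simpl csum at 2. rewrite Nat.sub_diag. simpl (J (sh (S n) ws) 0 y t).
    rewrite Cplus_comm. rewrite Cmult_1_r. f_equal.
    apply csum_ext. intros k Hk.
    rewrite CInt_mult_l.
    2:{ apply exC; intros; apply cont_Cmult; [apply J_cont2, wcont_sh; auto| apply Hw]. }
    f_equal. replace (match k with | 0 => S n | S l => (n - l)%nat end) with (S (n - k)) by (destruct k; lia). cbn [J].
    apply CInt_ext. intros x. change (sh k ws (n-k) x) with (ws (k + (n-k))%nat x). replace (k + (n - k))%nat with n by lia. reflexivity.
Qed.

Lemma CInt_cont_lower (f : R -> C) t : (forall x, continuous f x) -> forall x, continuous (fun y => CInt f y t) x.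
Proof. intros H x.
  apply (continuous_ext (fun y => Copp (CInt f t y))).
  { intros y. simpl. rewrite (CInt_swap f t y) by (apply exC, H). reflexivity. }
  apply (continuous_opp (V:=C_R_NormedModule) (fun y => CInt f t y)). apply CInt_cont, H. Qed.

Definition FR m := forall ws, wcont ws -> forall s t,
  J ws (S m) s t = CInt (fun eta => Cmult (ws 0%nat eta) (J (sh 1 ws) m eta t)) s t.
Definition C1 n := forall ws, wcont ws -> forall t x, continuous (fun eta => J ws n eta t) x.

Lemma FR0 : FR 0.
Proof. intros ws Hw s t. simpl. apply CInt_ext. intros; ring. Qed.

Lemma C1_0 : C1 0.
Proof. intros ws Hw t x. apply continuous_const. Qed.

Lemma C1_step m : FR m -> C1 m -> C1 (S m).
Proof.
  intros HF HC ws Hw t x.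
  apply (continuous_ext (fun eta => CInt (fun xi => Cmult (ws 0%nat xi) (J (sh 1 ws) m xi t)) eta t)).
  { intros y. rewrite HF by auto. reflexivity. }
  apply CInt_cont_lower. intros; apply cont_Cmult; [apply Hw | apply HC, wcont_sh, Hw].
Qed.

Lemma FR_step m : FR m -> (forall k, (k <= m)%nat -> C1 k) -> FR (S m).
Proof.
  intros HF HC ws Hw s t.
  set (B := fun k xi => J (sh k (sh 1 ws)) (m - k) s xi).
  set (g := fun k eta => Cmult (ws 0%nat eta) (J (sh 1 ws) k eta s)).
  set (h := fun k xi => Cmult (B k xi) (ws (S m) xi)).
  assert (Cg : forall k x, (k <= m)%nat -> continuous (g k) x).
  { intros k x Hk. unfold g. apply cont_Cmult; [apply Hw| apply (HC k Hk), wcont_sh, Hw]. }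
  assert (Ch : forall k x, continuous (h k) x).
  { intros k x. unfold h, B. apply cont_Cmult; [apply J_cont2, wcont_sh, wcont_sh, Hw| apply Hw]. }
  assert (LHS : J ws (S (S m)) s t = CInt (fun eta => csum (fun k => Cmult (g k eta) (CInt (h k) eta t)) m) s t).
  { change (J ws (S (S m)) s t) with (CInt (fun xi => Cmult (J ws (S m) s xi) (ws (S m) xi)) s t).
    rewrite (CInt_ext _ (fun xi => csum (fun k => Cmult (CInt (g k) s xi) (h k xi)) m)).
    2:{ intros xi. rewrite HF by auto.
        rewrite (CInt_ext _ (fun eta => csum (fun k => Cmult (g k eta) (B k xi)) m)).
        2:{ intros eta. rewrite (Chen (sh 1 ws) m (wcont_sh 1 ws Hw) eta s xi).
            rewrite csum_mult_l. apply csum_ext. intros k Hk. unfold g, B. ring. }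
        rewrite CInt_csum.
        2:{ intros k x Hk. apply cont_Cmult; [apply Cg; auto| apply continuous_const]. }
        rewrite csum_mult_r. apply csum_ext. intros k Hk.
        rewrite CInt_mult_r by (apply exC; intros; apply Cg; auto).
        unfold h. ring. }
    rewrite CInt_csum.
    2:{ intros k x Hk. apply cont_Cmult; [apply CInt_cont; intros; apply Cg; auto | apply Ch]. }
    rewrite CInt_csum.
    2:{ intros k x Hk. apply cont_Cmult; [apply Cg; auto | apply CInt_cont_lower; intros; apply Ch]. }
    apply csum_ext. intros k Hk. apply IBP; intros; [apply Cg; auto| apply Ch]. }
  rewrite LHS. apply CInt_ext. intros eta.
  change (J (sh 1 ws) (S m) eta t) with (CInt (fun xi => Cmult (J (sh 1 ws) m eta xi) (ws (S m) xi)) eta t).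
  rewrite (CInt_ext _ (fun xi => csum (fun k => Cmult (J (sh 1 ws) k eta s) (h k xi)) m)).
  2:{ intros xi. rewrite (Chen (sh 1 ws) m (wcont_sh 1 ws Hw) eta s xi).
      rewrite csum_mult_r. apply csum_ext. intros k Hk. unfold h, B. ring. }
  rewrite CInt_csum.
  2:{ intros k x Hk. apply cont_Cmult; [apply continuous_const| apply Ch]. }
  rewrite csum_mult_l. apply csum_ext. intros k Hk.
  rewrite CInt_mult_l by (apply exC, Ch). unfold g. ring.
Qed.

Lemma FR_C1_all m : FR m /\ (forall k, (k <= S m)%nat -> C1 k).
Proof.
  induction m as [|m [HF HC]].
  - split. apply FR0. intros k Hk. destruct k as [|[|k]]. apply C1_0. apply C1_step. apply FR0. apply C1_0. lia.
  - assert (HF' : FR (S m)) by (apply FR_step; auto).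
    split; auto. intros k Hk. destruct (Nat.le_gt_cases k (S m)). apply HC; auto.
    replace k with (S (S m)) by lia. apply C1_step; auto.
Qed.

Lemma FR_all m : FR m.
Proof. apply FR_C1_all. Qed.
Lemma C1_all n : C1 n.
Proof. destruct (FR_C1_all n) as [_ H]. apply H. lia. Qed.

Definition rv (n : nat) (ws : nat -> R -> C) : nat -> R -> C := fun i => ws (n - 1 - i)%nat.
Fixpoint sgn (n : nat) : C := match n with O => RtoC 1 | S m => Copp (sgn m) end.

Lemma wcont_rv n ws : wcont ws -> wcont (rv n ws).
Proof. intros H i x. apply H. Qed.

Lemma Rev n : forall ws, wcont ws -> forall s t, J ws n s t = Cmult (sgn n) (J (rv n ws) n t s).
Proof.
  induction n; intros ws Hw s t.
  - simpl. ring.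
  - change (J ws (S n) s t) with (CInt (fun xi => Cmult (J ws n s xi) (ws n xi)) s t).
    rewrite (CInt_ext _ (fun xi => Cmult (sgn n) (Cmult (J (rv n ws) n xi s) (ws n xi)))).
    2:{ intros xi. rewrite (IHn ws Hw s xi). ring. }
    rewrite CInt_mult_l.
    2:{ apply exC. intros; apply cont_Cmult; [apply (C1_all n _ (wcont_rv _ _ Hw))| apply Hw]. }
    rewrite (FR_all n (rv (S n) ws) (wcont_rv _ _ Hw) t s).
    rewrite (CInt_swap _ s t).
    2:{ apply exC. intros; apply cont_Cmult; [apply Hw| apply (C1_all n _ (wcont_sh _ _ (wcont_rv _ _ Hw)))]. }
    rewrite (CInt_ext (fun eta => Cmult (rv (S n) ws 0%nat eta) (J (sh 1 (rv (S n) ws)) n eta s)) (fun xi => Cmult (J (rv n ws) n xi s) (ws n xi)) s t).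
    2:{ intros xi. rewrite Cmult_comm. f_equal.
        - apply J_ext. intros i x Hi. unfold sh, rv. f_equal. lia.
        - unfold rv. f_equal. lia. }
    simpl sgn. ring.
Qed.

Definition cl (a b x : R) : R := Rmax a (Rmin b x).

Lemma cl_in a b x : a <= b -> a <= cl a b x <= b.
Proof. intros H. unfold cl, Rmax, Rmin. repeat destruct Rle_dec; lra. Qed.

Lemma cl_id a b x : a <= x <= b -> cl a b x = x.
Proof. intros H. unfold cl, Rmax, Rmin. repeat destruct Rle_dec; lra. Qed.

Lemma cl_cont a b x : continuous (cl a b) x.
Proof.
  apply filterlim_locally. intros eps. exists eps. intros y Hy.
  change (Rabs (cl a b y - cl a b x) < eps).
  change (Rabs (y - x) < eps) in Hy.
  assert (Rabs (cl a b y - cl a b x) <= Rabs (y - x)).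
  { unfold cl, Rmax, Rmin. repeat destruct Rle_dec; unfold Rabs; repeat destruct Rcase_abs; lra. }
  lra.
Qed.

Lemma Phi_cl_cont a b (Phi : R -> C) : continuous_on_ab a b Phi -> a <= b ->
  forall x, continuous (fun y => Phi (cl a b y)) x.
Proof.
  intros Hc Hab x P HP.
  assert (K := Hc (cl a b x) (cl_in a b x Hab) P HP).
  unfold filtermap, within in K.
  assert (K2 := cl_cont a b x _ K).
  unfold filtermap in K2 |- *.
  revert K2. apply filter_imp. intros y Hy. apply Hy. apply cl_in; auto.
Qed.

Definition wgt a b (Psi : R -> C) : nat -> R -> C :=
  fun i x => if Nat.even (S i) then Psi (cl a b x) else Cinv (Psi (cl a b x)).

Lemma Xpow_J a b (Psi : R -> C) : wcont (wgt a b Psi) ->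
  forall n s t, a <= s <= b -> a <= t <= b ->
  Xpow Psi n s t = Cmult (RtoC (INR (Factorial.fact n))) (J (wgt a b Psi) n s t).
Proof.
  intros Hw n. induction n; intros s t Hs Ht.
  - simpl. ring.
  - cbn [Xpow].
    rewrite (RInt_ext (V:=C_R_CompleteNormedModule) _
      (fun xi => Cmult (RtoC (INR (Factorial.fact n))) (Cmult (J (wgt a b Psi) n s xi) (wgt a b Psi n xi)))).
    2:{ intros xi Hxi. assert (Hx : a <= xi <= b).
        { revert Hxi. unfold Rmin, Rmax. destruct Rle_dec; intros; lra. }
        rewrite (IHn s xi Hs Hx). unfold wgt. rewrite (cl_id a b xi Hx). symmetry. apply Cmult_assoc. }
    rewrite CInt_mult_l.
    2:{ apply exC. intros; apply cont_Cmult; [apply J_cont2, Hw| apply Hw]. }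
    change (CInt (fun xi => Cmult (J (wgt a b Psi) n s xi) (wgt a b Psi n xi)) s t) with (J (wgt a b Psi) (S n) s t).
    rewrite (fact_simpl n), mult_INR, RtoC_mult. ring.
Qed.

Lemma par n i : (i < n)%nat -> Nat.even (S (n - 1 - i)) = Bool.eqb (Nat.even n) (Nat.even i).
Proof.
  intros H. assert (E : Nat.even n = Nat.even (S (n - 1 - i) + i)) by (f_equal; lia).
  rewrite E, Nat.even_add. destruct (Nat.even (S (n - 1 - i))), (Nat.even i); reflexivity.
Qed.

Lemma even_S n : Nat.even (S n) = negb (Nat.even n).
Proof. rewrite Nat.even_succ. unfold Nat.odd. reflexivity. Qed.

Lemma sgn_val n : sgn n = if Nat.even n then RtoC 1 else Copp (RtoC 1).
Proof. induction n. reflexivity. simpl sgn. rewrite IHn, even_S. destruct (Nat.even n); simpl; ring. Qed.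

Lemma Cinv_nz (z : C) : z <> RtoC 0 -> Cinv z <> RtoC 0.
Proof. intros H E. assert (K := Cinv_l z H). rewrite E in K.
  rewrite Cmult_0_l in K. apply RtoC_inj in K. lra. Qed.

Theorem theorem2 (a b : R) (Phi : R -> C)
  (Hcont : continuous_on_ab a b Phi)
  (Hnz : forall x, a <= x <= b -> Phi x <> RtoC 0) :
  forall (n : nat) (x0 x : R), a <= x0 <= b -> a <= x <= b ->
    (Nat.even n = true -> Xtilde Phi n x0 x = Xpow Phi n x x0) /\
    (Nat.odd n = true ->
       Xtilde Phi n x0 x = Copp (Xtilde Phi n x x0) /\
       Xpow Phi n x0 x = Copp (Xpow Phi n x x0)).
Proof.
  intros n x0 x Hx0 Hx.
  assert (Hab : a <= b) by lra.
  assert (Pc := Phi_cl_cont a b Phi Hcont Hab).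
  assert (Pn : forall y, Phi (cl a b y) <> RtoC 0) by (intros; apply Hnz, cl_in, Hab).
  set (Psi := fun xi => Cinv (Phi xi)).
  assert (Hw1 : wcont (wgt a b Phi)).
  { intros i y. unfold wgt. destruct (Nat.even (S i)). apply Pc. apply cont_Cinv; auto. }
  assert (Hw2 : wcont (wgt a b Psi)).
  { intros i y. unfold wgt, Psi. destruct (Nat.even (S i)). apply cont_Cinv; auto.
    apply cont_Cinv. apply cont_Cinv; auto. apply Cinv_nz; auto. }
  assert (XT : forall s t, a <= s <= b -> a <= t <= b ->
     Xtilde Phi n s t = Cmult (RtoC (INR (Factorial.fact n))) (J (wgt a b Psi) n s t)).
  { intros s t Hs Ht. unfold Xtilde. apply (Xpow_J a b Psi Hw2); auto. }
  assert (XX : forall s t, a <= s <= b -> a <= t <= b ->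
     Xpow Phi n s t = Cmult (RtoC (INR (Factorial.fact n))) (J (wgt a b Phi) n s t)).
  { intros s t Hs Ht. apply (Xpow_J a b Phi Hw1); auto. }
  assert (II : forall y, Cinv (Cinv (Phi (cl a b y))) = Phi (cl a b y)).
  { intros y. field. auto. }
  split.
  - intros He.
    rewrite XT, XX by auto. rewrite (Rev n _ Hw1 x x0), sgn_val, He.
    f_equal. rewrite Cmult_1_l. apply J_ext. intros i y Hi.
    unfold rv, wgt, Psi. rewrite par, He, even_S by auto. rewrite II.
    destruct (Nat.even i); reflexivity.
  - intros Ho. assert (He : Nat.even n = false).
    { unfold Nat.odd in Ho. destruct (Nat.even n); auto. }
    split.
    + rewrite !XT by auto. rewrite (Rev n _ Hw2 x0 x), sgn_val, He.
      rewrite (J_ext (rv n (wgt a b Psi)) (wgt a b Psi)). ring.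
      intros i y Hi. unfold rv, wgt. rewrite par, He, even_S by auto.
      destruct (Nat.even i); reflexivity.
    + rewrite !XX by auto. rewrite (Rev n _ Hw1 x0 x), sgn_val, He.
      rewrite (J_ext (rv n (wgt a b Phi)) (wgt a b Phi)). ring.
      intros i y Hi. unfold rv, wgt. rewrite par, He, even_S by auto.
      destruct (Nat.even i); reflexivity.
Qed.
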